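(* Let $H$ be an $l$-ARS graph. Then $\chi_c(H)=l$, and there exists an integer $n_0$ such that every graph $G\in\mathrm{red}(\mathrm{Forb}(H))$ with $|V(G)|\ge n_0$ has at most one non-edge. In particular, $H$ is $2$-critical.
   Context: All graphs are finite and simple; $\mathrm{Forb}(H)$ is the family of graphs with no induced subgraph isomorphic to $H$. A non-edge is a pair of distinct non-adjacent vertices. $\mathcal{C}$ is the family of complete graphs; $\iota(J)$ is the family of graphs isomorphic to induced subgraphs of $J$; $\mathcal{F}_1\vee\mathcal{F}_2$ (resp. $\mathcal{F}_1\wedge\mathcal{F}_2$) is the family of disjoint unions (resp. joins) of a graph in $\mathcal{F}_1$ and a graph in $\mathcal{F}_2$. $K_1$ is the one-vertex graph, $S_3$ the edgeless graph on $3$ vertices, $C_4$ the $4$-cycle, $\bar P_3$ the complement of the $3$-vertex path. $\mathcal{H}(s,t)$ is the family of graphs whose vertex set can be partitioned into $s$ stable sets and $t$ cliques. For a hereditary family $\mathcal{F}$, $\chi_c(\mathcal{F})$ is the maximum $l$ with $\mathcal{H}(s,l-s)\subseteq\mathcal{F}$ for some $0\le s\le l$; $\chi_c(H)=\chi_c(\mathrm{Forb}(H))$ (equivalently, the maximum $l$ such that $H\notin\mathcal{H}(s,t)$ for some $s,t\ge0$ with $s+t=l$). With $l=\chi_c(\mathcal{F})$, a graph $J$ is $\mathcal{F}$-reduced if there is $0\le s\le l-1$ such that $\mathcal{F}$ contains every graph whose vertex set partitions into $l$ parts, one inducing a graph isomorphic to an induced subgraph of $J$, $s$ stable sets and $l-1-s$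 cliques; $\mathrm{red}(\mathcal{F})$ is the family of $\mathcal{F}$-reduced graphs. A graph $G$ is an $s$-star if there is $S\subseteq V(G)$, $|S|\le s$, with $G-S$ complete or edgeless and every vertex of $S$ adjacent to all or to none of $V(G)\setminus S$. A graph $H$ is $s$-critical if there is $n_0$ such that every $K\in\mathrm{red}(\mathrm{Forb}(H))$ with $|V(K)|\ge n_0$ is an $s$-star. A graph $H$ is an $l$-ARS-graph ($l$ a positive integer) if: (ARS1) for every $1\le s\le l$, $V(H)$ can be partitioned into $s$ stable sets and $l-s$ cliques; (ARS2) for each $\mathcal{G}\in\{\iota(K_1)\vee\mathcal{C},\iota(S_3)\wedge\mathcal{C},\iota(C_4)\wedge\mathcal{C},\iota(\bar P_3)\wedge\mathcal{C}\}$, $V(H)$ can be partitioned into $l-1$ cliques and a set inducing a graph in $\mathcal{G}$; (ARS3) there is a partition $\mathcal{X}_0=\{X_1,\dots,X_l\}$ of $V(H)$ with $X_1,\dots,X_{l-2}$ cliques, each of $H[X_{l-1}],H[X_l]$ having exactly one non-edge, and the four vertices of these two non-edges forming an independent set; (ARS4) for every partition $\mathcal{X}\ne\mathcal{X}_0$ of $V(H)$ with $|\mathcal{X}|=l$ some $X\in\mathcal{X}$ has $H[X]$ with at least two non-edges. *)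

(* Defs.v *)
From mathcomp Require Import all_boot.
Set Implicit Arguments. Unset Strict Implicit. Unset Printing Implicit Defensive.

Record sgraph := SGraph {
  V : finType;
  adj : rel V;
  adj_sym : symmetric adj;
  adj_irr : irreflexive adj }.

Definition mkadj n (r : rel 'I_n) : rel 'I_n :=
  fun x y => (x != y) && (r x y || r y x).
Lemma mkadj_sym n (r : rel 'I_n) : symmetric (mkadj r).
Proof. by move=> x y; rewrite /mkadj eq_sym orbC. Qed.
Lemma mkadj_irr n (r : rel 'I_n) : irreflexive (mkadj r).
Proof. by move=> x; rewrite /mkadj eqxx. Qed.
Definition mkgraph n (r : rel 'I_n) : sgraph :=
  @SGraph 'I_n (mkadj r) (@mkadj_sym n r) (@mkadj_irr n r).

Definition K1 : sgraph := @mkgraph 1 (fun _ _ => false).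
Definition S3 : sgraph := @mkgraph 3 (fun _ _ => false).
Definition C4 : sgraph :=
  @mkgraph 4 (fun x y => nat_of_ord y == (nat_of_ord x).+1 %% 4).
Definition P3bar : sgraph :=
  @mkgraph 3 (fun x y => (nat_of_ord x == 0) && (nat_of_ord y == 2)).

Definition induced (J G : sgraph) : Prop :=
  exists f : V J -> V G, injective f /\
    forall x y, adj x y = adj (f x) (f y).

(* G[A] is isomorphic to an induced subgraph of J, i.e. G[A] lies in iota(J) *)
Definition induced_on (G : sgraph) (A : {set V G}) (J : sgraph) : Prop :=
  exists g : {x : V G | x \in A} -> V J, injective g /\
    forall x y, adj (val x) (val y) = adj (g x) (g y).

Definition family := sgraph -> Prop.
Definition subfam (F1 F2 : family) : Prop := forall G, F1 G -> F2 G.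
Definition Forb (H : sgraph) : family := fun G => ~ induced H G.

Definition stable (G : sgraph) (A : {set V G}) : Prop :=
  forall x y, x \in A -> y \in A -> ~~ adj x y.
Definition clique (G : sgraph) (A : {set V G}) : Prop :=
  forall x y, x \in A -> y \in A -> x != y -> adj x y.

(* H(s,t): V(G) partitions into s stable sets and t cliques (parts may be
   empty); part i is stable if i < s and a clique otherwise. *)
Definition Hst (s t : nat) : family := fun G =>
  exists f : V G -> 'I_(s + t),
    forall i : 'I_(s + t),
      (i < s -> stable [set x | f x == i]) /\
      (s <= i -> clique [set x | f x == i]).

Definition chi_c_ok (F : family) (l : nat) : Prop :=
  exists2 s, s <= l & subfam (Hst s (l - s)) F.
Definition chi_c (F : family) (l : nat) : Prop :=
  chi_c_ok F l /\ forall l', chi_c_ok F l' -> l' <= l.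

Definition reduced (F : family) (J : sgraph) : Prop :=
  exists l, chi_c F l /\
    exists2 s, s <= l.-1 &
      forall G : sgraph,
        (exists f : V G -> option 'I_(l.-1),
           induced_on [set x | f x == None] J /\
           forall i : 'I_(l.-1),
             (i < s -> stable [set x | f x == Some i]) /\
             (s <= i -> clique [set x | f x == Some i])) ->
        F G.

Definition star (s : nat) (G : sgraph) : Prop :=
  exists S : {set V G}, #|S| <= s /\
    (clique (~: S) \/ stable (~: S)) /\
    forall v, v \in S ->
      (forall w, w \notin S -> adj v w) \/ (forall w, w \notin S -> ~~ adj v w).

Definition critical (s : nat) (H : sgraph) : Prop :=
  exists n0, forall K : sgraph, reduced (Forb H) K -> n0 <= #|V K| -> star s K.

Definition nonedge (G : sgraph) (u v : V G) : bool := (u != v) && ~~ adj u v.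

Definition unique_nonedge (G : sgraph) (X : {set V G}) (a b : V G) : Prop :=
  [/\ a \in X, b \in X, nonedge a b &
     forall u v, u \in X -> v \in X -> nonedge u v -> [set u; v] = [set a; b]].

Definition two_nonedges (G : sgraph) (X : {set V G}) : Prop :=
  exists u v u' v', [/\ u \in X, v \in X, u' \in X & v' \in X] /\
    [/\ nonedge u v, nonedge u' v' & [set u; v] != [set u'; v']].

Definition union_clique (J : sgraph) (G : sgraph) (P : {set V G}) : Prop :=
  exists2 A : {set V G}, A \subset P &
    [/\ induced_on A J, clique (P :\: A) &
        forall x y, x \in A -> y \in P :\: A -> ~~ adj x y].
Definition join_clique (J : sgraph) (G : sgraph) (P : {set V G}) : Prop :=
  exists2 A : {set V G}, A \subset P &
    [/\ induced_on A J, clique (P :\: A) &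
        forall x y, x \in A -> y \in P :\: A -> adj x y].

(* V(H) partitions into l-1 cliques (possibly empty) and a set P with Q P *)
Definition cliques_plus (H : sgraph) (l : nat) (Q : {set V H} -> Prop) : Prop :=
  exists f : V H -> option 'I_(l.-1),
    Q [set x | f x == None] /\
    forall i : 'I_(l.-1), clique [set x | f x == Some i].

(* l-ARS graph; partitions in (ARS3)/(ARS4) are set partitions into
   nonempty blocks (mathcomp's [partition]). *)
Definition ARS (H : sgraph) (l : nat) : Prop :=
  [/\ 0 < l,
    (* ARS1 *)
    (forall s, 1 <= s <= l -> Hst s (l - s) H),
    (* ARS2 *)
    [/\ cliques_plus l (@union_clique K1 H),
        cliques_plus l (@join_clique S3 H),
        cliques_plus l (@join_clique C4 H) &
        cliques_plus l (@join_clique P3bar H)] &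
    (* ARS3 and ARS4 *)
    exists X0 : {set {set V H}},
      [/\ partition X0 [set: V H], #|X0| = l,
        (exists X Y a b c d,
           [/\ X \in X0, Y \in X0, X != Y,
               unique_nonedge X a b & unique_nonedge Y c d] /\
           [/\ (forall Z, Z \in X0 -> Z != X -> Z != Y -> clique Z) &
               stable [set a; b; c; d]]) &
        forall X : {set {set V H}}, partition X [set: V H] -> #|X| = l ->
          X != X0 -> exists2 Z, Z \in X & two_nonedges Z]].

Definition at_most_one_nonedge (G : sgraph) : Prop :=
  forall u v u' v' : V G, nonedge u v -> nonedge u' v' -> [set u; v] = [set u'; v'].

(* Main.v *)
Require Import Defs.
From mathcomp Require Import all_boot zify.
Set Implicit Arguments. Unset Strict Implicit. Unset Printing Implicit Defensive.


Lemma ramsey (G : sgraph) n : forall a b (A : {set V G}), a + b <= n -> 2 ^ (a + b) <= #|A| ->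
  (exists2 C : {set V G}, C \subset A & clique C /\ a <= #|C|) \/
  (exists2 S : {set V G}, S \subset A & stable S /\ b <= #|S|).
Proof.
elim: n => [|n IH] [|a] [|b] A hab hA.
- by left; exists set0; rewrite ?sub0set //; split => // x y; rewrite in_set0.
- by left; exists set0; rewrite ?sub0set //; split => // x y; rewrite in_set0.
- by right; exists set0; rewrite ?sub0set //; split => // x y; rewrite in_set0.
- lia.
- by left; exists set0; rewrite ?sub0set //; split => // x y; rewrite in_set0.
- by left; exists set0; rewrite ?sub0set //; split => // x y; rewrite in_set0.
- by right; exists set0; rewrite ?sub0set //; split => // x y; rewrite in_set0.
have : 0 < #|A| by apply: leq_trans hA; rewrite expn_gt0.
case/card_gt0P => x xA.
set A' := A :\ x.
set N := A' :&: [set y | adj x y].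
set M := A' :\: [set y | adj x y].
have hc := cardsID [set y | adj x y] A'.
have hA' : #|A'| = #|A| - 1 by rewrite /A' (cardsD1 x A) xA; lia.
have NA : N \subset A by rewrite /N /A'; apply/subsetP => y; rewrite !inE => /andP[/andP[]].
have MA : M \subset A by rewrite /M /A'; apply/subsetP => y; rewrite !inE => /andP[_ /andP[]].
have e2 : 2 ^ (a.+1 + b.+1) = 2 ^ (a + b.+1) + 2 ^ (a.+1 + b).
  by rewrite addSn addnS !expnS; lia.
have [hN|hM] : 2 ^ (a + b.+1) <= #|N| \/ 2 ^ (a.+1 + b) <= #|M|.
  have : 2 ^ (a + b.+1) + 2 ^ (a.+1 + b) <= #|N| + #|M| + 1.
    rewrite -e2 /N /M hc hA'. have : 0 < #|A| by apply/card_gt0P; exists x. lia.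
  have -> : a.+1 + b = a + b.+1 by lia.
  lia.
- case: (IH a b.+1 N ltac:(lia) hN) => [[C CN [cC aC]]|[S SN [sS bS]]].
  + left; exists (x |: C).
      by rewrite subUset sub1set xA (subset_trans CN NA).
    split; last first.
      have xC : x \notin C.
        apply/negP => /(subsetP CN); rewrite /N !inE => /andP[/andP[]]; by rewrite eqxx.
      by rewrite cardsU1 xC.
    have adjC : forall y, y \in C -> adj x y.
      by move=> y /(subsetP CN); rewrite /N !inE => /andP[_].
    move=> u v; rewrite !inE => /orP[/eqP->|uC] /orP[/eqP->|vC]; rewrite ?eqxx //.
    * by move=> _; apply: adjC.
    * by move=> _; rewrite adj_sym; apply: adjC.
    * by apply: cC.
  + by right; exists S => //; exact: subset_trans SN NA.
- case: (IH a.+1 b M ltac:(lia) hM) => [[C CM [cC aC]]|[S SM [sS bS]]].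
  + by left; exists C => //; exact: subset_trans CM MA.
  + right; exists (x |: S).
      by rewrite subUset sub1set xA (subset_trans SM MA).
    split; last first.
      have xS : x \notin S.
        apply/negP => /(subsetP SM); rewrite /M !inE => /andP[_ /andP[]]; by rewrite eqxx.
      by rewrite cardsU1 xS.
    have nadjS : forall y, y \in S -> ~~ adj x y.
      by move=> y /(subsetP SM); rewrite /M !inE => /andP[].
    move=> u v; rewrite !inE => /orP[/eqP->|uS] /orP[/eqP->|vS].
    * by rewrite adj_irr.
    * by apply: nadjS.
    * by rewrite adj_sym; apply: nadjS.
    * by apply: sS.
Qed.

Lemma embed (H G J : sgraph) (P A : {set V H}) (b c : bool) (e : V J -> V G)
  (K : {set V G}) (k0 : V G) :
  A \subset P -> induced_on A J ->
  (forall x y, x \in P :\: A -> y \in P :\: A -> x != y -> adj x y = c) ->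
  (forall x y, x \in A -> y \in P :\: A -> adj x y = b) ->
  injective e -> (forall i j, adj i j = adj (e i) (e j)) ->
  (forall k k', k \in K -> k' \in K -> k != k' -> adj k k' = c) ->
  (forall j k, k \in K -> adj (e j) k = b /\ e j != k) ->
  #|P :\: A| <= #|K| -> k0 \in K -> induced_on P G.
Proof.
move=> AP [g [ginj gadj]] hc hb einj eadj Kc Kb cardK k0K.
pose s := enum (P :\: A); pose t := enum K.
pose hk z := nth k0 t (index z s).
have hkK : forall z, z \in P :\: A -> hk z \in K.
  move=> z zs; rewrite -mem_enum /hk; apply: mem_nth.
  apply: leq_trans (_ : size s <= _).
    by rewrite index_mem mem_enum.
  by rewrite -!cardE.
have hkinj : forall z z', z \in P :\: A -> z' \in P :\: A -> hk z = hk z' -> z = z'.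
  move=> z z' zs z's /eqP; rewrite /hk nth_uniq ?enum_uniq //.
  - by move/eqP; apply: index_inj; rewrite /s ?mem_enum //.
  - apply: leq_trans (_ : size s <= _); first by rewrite index_mem mem_enum.
    by rewrite -!cardE.
  - apply: leq_trans (_ : size s <= _); first by rewrite index_mem mem_enum.
    by rewrite -!cardE.
pose phi (x : {x | x \in P}) : V G :=
  match (insub (val x) : option {z | z \in A}) with
  | Some y => e (g y) | None => hk (val x) end.
have inD : forall x, x \in P -> x \notin A -> x \in P :\: A.
  by move=> x xP xA; rewrite inE xA xP.
exists phi; split.
  move=> [x xP] [y yP]; rewrite /phi /=.
  case: insubP => [u uA ux|nA]; case: insubP => [v vA vy|nB].
  - move/einj/ginj => uv; apply: val_inj => /=; by rewrite -ux -vy uv.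
  - move=> E; have := Kb (g u) (hk y) (hkK _ (inD _ yP nB)); rewrite E eqxx; by case.
  - move=> E; have := Kb (g v) (hk x) (hkK _ (inD _ xP nA)); rewrite E eqxx; by case.
  - move=> E; apply: val_inj => /=; exact: hkinj (inD _ xP nA) (inD _ yP nB) E.
move=> [x xP] [y yP]; rewrite /phi /=.
case: insubP => [u uA ux|nA]; case: insubP => [v vA vy|nB].
- by rewrite -ux -vy gadj eadj.
- rewrite -ux hb ?(valP u) ?inD //.
  by case: (Kb (g u) (hk y) (hkK _ (inD _ yP nB))).
- rewrite -vy adj_sym hb ?(valP v) ?inD //.
  by case: (Kb (g v) (hk x) (hkK _ (inD _ xP nA))) => <- _; rewrite adj_sym.
- have [->|xy] := eqVneq x y; first by rewrite !adj_irr.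
  rewrite hc ?inD // Kc ?hkK ?inD //.
  by apply/eqP => /(hkinj _ _ (inD _ xP nA) (inD _ yP nB)); apply/eqP.
Qed.

Definition J0 : sgraph := @mkgraph 0 (fun _ _ => false).

Lemma embed_hom (H G : sgraph) (P : {set V H}) (c : bool) (K : {set V G}) (k0 : V G) :
  (forall x y, x \in P -> y \in P -> x != y -> adj x y = c) ->
  (forall x y, x \in K -> y \in K -> x != y -> adj x y = c) ->
  #|P| <= #|K| -> k0 \in K -> induced_on P G.
Proof.
move=> hP hK cP k0K.
have e0 : forall j : V J0, False by case=> m hm; rewrite ltn0 in hm.
apply: (@embed H G J0 P set0 false c (fun _ => k0) K k0) => //.
- exact: sub0set.
- have g : {x : V H | x \in (set0 : {set V H})} -> V J0.
    by case=> x hx; exfalso; move: hx; rewrite in_set0.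
  exists g; split; first by case=> x hx; exfalso; move: hx; rewrite in_set0.
  by case=> x hx; exfalso; move: hx; rewrite in_set0.
- by move=> x y; rewrite !setD0; apply: hP.
- by move=> x y; rewrite in_set0.
all: try by move=> i; case: (e0 i).
by rewrite setD0.
Qed.

Lemma Hst_mono (G : sgraph) s t s' t' : s <= s' -> t <= t' -> Hst s t G -> Hst s' t' G.
Proof.
move=> ss tt [f hf].
pose h (i : nat) := if i < s then i else i - s + s'.
have hle : s + t <= s' + t' by lia.
pose f' x := insubd (widen_ord hle (f x)) (h (f x)) : 'I_(s' + t').
have hlt : forall x, h (f x) < s' + t'.
  move=> x; have := ltn_ord (f x); rewrite /h; case: ifP => Hh; lia.
have f'E : forall x, (f' x : nat) = h (f x) by move=> x; rewrite /f' val_insubd hlt.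
exists f' => i; split => hi u v; rewrite !inE => /eqP fu /eqP fv.
- have := f'E u; have := f'E v; rewrite fu fv /h.
  case: ifP => hv; case: ifP => hu; try lia.
  move=> ev eu.
  have fuv : f u = f v by apply: ord_inj; rewrite -eu -ev.
  have [st _] := hf (f u).
  by apply: st => //; rewrite ?inE ?fuv.
- have := f'E u; have := f'E v; rewrite fu fv /h.
  case: ifP => hv; case: ifP => hu; try lia.
  move=> ev eu.
  have fuv : f u = f v by apply: ord_inj; lia.
  have [_ cl] := hf (f u).
  by apply: cl; rewrite ?inE ?fuv ?eqxx //; lia.
Qed.

Lemma surj_fix (T : finType) n (P : {set T} -> Prop) :
  n <= #|T| -> (forall A B : {set T}, A \subset B -> P B -> P A) -> (forall x, P [set x]) ->
  forall f : T -> 'I_n, (forall i, P [set x | f x == i]) ->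
  exists g : T -> 'I_n, (forall i, exists x, g x = i) /\ forall i, P [set x | g x == i].
Proof.
move=> nT Pher P1 f.
move: {2}(n - #|f @: T|) (leqnn (n - #|f @: T|)) => k.
elim: k f => [|k IH] f hk hf.
- exists f; split => // i.
  have : f @: T = [set: 'I_n].
    apply/eqP; rewrite eqEcard subsetT cardsT card_ord; lia.
  by move/setP/(_ i); rewrite inE => /imsetP[x _ ->]; exists x.
- have [allin|] := boolP [forall i, i \in f @: T].
    exists f; split => // i; move/forallP/(_ i): allin => /imsetP[x _ ->].
    by exists x.
  rewrite negb_forall => /existsP[i ni].
  have : ~~ injectiveb f.
    apply/negP => /injectiveP finj.
    have := card_imset T finj.
    have : f @: T \subset [set~ i].
      apply/subsetP => j jf; rewrite !inE; apply: contraNneq ni => <-; done.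
    move/subset_leq_card; rewrite cardsC1 card_ord. move=> h1 h2. have := ltn_ord i. have h6 := leq_trans nT (leq_trans (eq_leq (esym h2)) h1). lia.
  case/injectivePn => x [y xy fxy].
  pose g z := if z == x then i else f z.
  have sub : f @: T \proper g @: T.
    apply/properP; split.
      apply/subsetP => _ /imsetP[z _ ->].
      case: (eqVneq z x) => [->|zx].
        by rewrite fxy; apply/imsetP; exists y => //; rewrite /g eq_sym (negbTE xy).
      by apply/imsetP; exists z => //; rewrite /g (negbTE zx).
    by exists i => //; apply/imsetP; exists x => //; rewrite /g eqxx.
  have := proper_card sub; have := max_card (g @: T); rewrite card_ord => h1 h2.
  apply: (IH g); first by lia.
  move=> j; case: (eqVneq j i) => [->|ji].
    have -> : [set z | g z == i] = [set x] => //.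
    apply/setP => z; rewrite !inE /g; case: (eqVneq z x) => _; first by rewrite eqxx.
    apply: negbTE; apply: contra ni => /eqP <-; exact: imset_f.
  apply: (Pher _ _ _ (hf j)); apply/subsetP => z; rewrite !inE /g.
  case: (eqVneq z x) => _ //; rewrite ?(negbTE ji) // ?eqxx; by rewrite eq_sym (negbTE ji).
Qed.

Lemma clique_sub (G : sgraph) (A B : {set V G}) : A \subset B -> clique B -> clique A.
Proof. by move=> AB cB x y xA yA; apply: cB; apply: (subsetP AB). Qed.

Lemma clique1 (G : sgraph) (x : V G) : clique [set x].
Proof. by move=> u v; rewrite !inE => /eqP-> /eqP->; rewrite eqxx. Qed.

Lemma induced_Hst (H G : sgraph) s t : induced H G -> Hst s t G -> Hst s t H.
Proof.
move=> [phi [pinj padj]] [f hf]; exists (fun x => f (phi x)) => i.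
have [st cl] := hf i; split => hi u v; rewrite !inE => fu fv.
- by rewrite padj; apply: st => //; rewrite inE.
- move=> uv; rewrite padj; apply: cl => //; rewrite ?inE //.
  by apply: contra uv => /eqP/pinj ->.
Qed.

Lemma induced_refl (H : sgraph) : induced H H.
Proof. by exists id; split. Qed.

Lemma not_Hst0 (H : sgraph) l : ARS H l -> ~ Hst 0 l H.
Proof.
case=> l0 _ _ [X0 [pX0 cX0 [[X [Y [a [b [c [d [[XX0 YX0 XY uX uY] _]]]]]]]] A4]].
case=> f hf.
have nT : l <= #|V H|.
  by rewrite -cX0 -cardsT (card_partition pX0); rewrite -sum1_card leq_sum // => B BX; rewrite card_gt0 (partition_neq0 pX0 BX).
have [g [gs gc]] := @surj_fix (V H) l (@clique H) nT (@clique_sub H) (@clique1 H) f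
   (fun i => (hf i).2 (leq0n _)).
pose F (i : 'I_l) := [set x | g x == i].
pose Xg := F @: [set: 'I_l].
have n0 : set0 \notin Xg.
  apply/imsetP => -[i _ E]; have [x gx] := gs i.
  by have := in_set0 x; rewrite E /F inE gx eqxx.
have [ti Finj] : trivIset Xg /\ {in [set: 'I_l] &, injective F}.
  apply: trivIimset => // i j _ _ ji; rewrite -setI_eq0; apply/eqP/setP => z.
  by rewrite !inE; apply/negP => /andP[/eqP-> /eqP E]; move: ji; rewrite E eqxx.
have pXg : partition Xg [set: V H].
  apply/and3P; split => //; rewrite cover_imset; apply/eqP/setP => z.
  by rewrite inE; apply/bigcupP; exists (g z) => //; rewrite inE.
have cXg : #|Xg| = l by rewrite card_in_imset // cardsT card_ord.
have XgX0 : Xg != X0.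
  apply/negP => /eqP E; move: XX0; rewrite -E => /imsetP[i _ Ei].
  case: uX => aX bX /andP[ab nab] _.
  by move: (gc i a b); rewrite -/(F i) -Ei aX bX => /(_ isT isT ab); rewrite (negbTE nab).
have [Z ZX [u [v [u' [v' [[uZ vZ u'Z v'Z] [/andP[uv nuv] _ _]]]]]]] := A4 Xg pXg cXg XgX0.
move: ZX => /imsetP[i _ Ei].
by move: (gc i u v); rewrite -/(F i) -Ei uZ vZ => /(_ isT isT uv); rewrite (negbTE nuv).
Qed.

Lemma ltn_pord n (i : 'I_n.-1) : (i : nat) < n.
Proof. case: n i => [|n] [m hm] /=; lia. Qed.

Lemma ltn_pord' n (i : 'I_n.-1) : (i : nat) < n.-1.
Proof. exact: ltn_ord. Qed.

Lemma K1_small (H : sgraph) (A : {set V H}) : induced_on A K1 -> clique A.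
Proof.
move=> [g [ginj _]] x y xA yA xy; exfalso; move/negP: xy; apply.
have := ginj (exist _ x xA) (exist _ y yA).
have -> : g (exist _ x xA) = g (exist _ y yA) by apply: ord_inj; case: (g _) => [[|]] //; case: (g _) => [[|]].
by move=> /(_ erefl) [->].
Qed.

Lemma K1_cover (H : sgraph) l : ARS H l -> Hst 0 l.+1 H.
Proof.
case=> l0 _ [[f [[A AP [iA cPA _]] cl]] _ _ _] _.
set P := [set x | f x == None] in AP cPA.
pose k x := match f x with Some i => nat_of_ord i | None => if x \in A then l.-1 else l end.
have kle : forall x, k x < l.+1.
  move=> x; rewrite /k; case: (f x) => [i|]; last by have := leq_pred l; case: ifP => _; lia.
  have := ltn_pord i; lia.
exists (fun x => inord (k x) : 'I_l.+1) => j; split => // _ u v.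
rewrite !inE => /eqP fu /eqP fv uv.
have : k u = k v by rewrite -(@inordK l (k u)) ?kle // -(@inordK l (k v)) ?kle // fu fv.
have cA := K1_small iA.
rewrite /k; case Eu: (f u) => [iu|]; case Ev: (f v) => [iv|].
- move=> E; have Eiv : iu = iv by apply: ord_inj.
  by apply: (cl iu); rewrite ?inE ?Eu ?Ev ?Eiv.
- have := ltn_ord iu; case: ifP => _; lia.
- have := ltn_ord iv; case: ifP => _; lia.
- have uP : u \in P by rewrite inE Eu.
  have vP : v \in P by rewrite inE Ev.
  case: ifP => uA; case: ifP => vA; try lia; move=> _.
  + exact: cA.
  + by apply: cPA => //; rewrite inE ?uA ?vA ?uP ?vP.
Qed.

Lemma chi_c_part (H : sgraph) l : ARS H l -> chi_c (Forb H) l.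
Proof.
move=> ars; have [l0 A1 _ _] := ars; split.
  exists 0 => // G hG ind.
  apply: (not_Hst0 ars); rewrite -(subn0 l); exact: induced_Hst ind hG.
move=> l' [s' s'l sub].
rewrite leqNgt; apply/negP => ll'.
apply: (sub H) (induced_refl H).
case: s' s'l sub => [|s'] s'l sub.
  by apply: (Hst_mono _ _ (K1_cover ars)); lia.
case: (leqP s'.+1 l) => hs.
  by apply: (Hst_mono _ _ (A1 s'.+1 ltac:(lia))); lia.
by apply: (Hst_mono _ _ (A1 l ltac:(lia))); lia.
Qed.

Definition RedP (H G : sgraph) l s : Prop :=
  forall f : V H -> option 'I_(l.-1), induced_on [set x | f x == None] G ->
  (forall i : 'I_(l.-1), (i < s -> stable [set x | f x == Some i]) /\
                         (s <= i -> clique [set x | f x == Some i])) -> False.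

Lemma reduced_RedP (H G : sgraph) l : ARS H l -> reduced (Forb H) G ->
  exists2 s, s <= l.-1 & RedP H G l s.
Proof.
move=> ars [l1 [[ok1 max1] [s sl P]]].
have [ok max] := chi_c_part ars.
have e : l1 = l by apply/eqP; rewrite eqn_leq max1 // max.
subst l1; exists s => // f hi hc.
by apply: (P H) (induced_refl H); exists f.
Qed.

Lemma C1 (H G : sgraph) l s : ARS H l -> s <= l.-1 -> RedP H G l s ->
  forall S : {set V G}, stable S -> #|V H| < #|S| -> False.
Proof.
move=> ars sl red S sS cS.
have [l0 A1 _ _] := ars.
have [f hf] := A1 s.+1 ltac:(lia).
have fl : forall x, (f x : nat) < l by move=> x; have := ltn_ord (f x); lia.
pose f' x : option 'I_(l.-1) := if (f x : nat) == 0 then None else insub (f x).-1.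
have f'S : forall x i, (f' x == Some i) = ((f x : nat) == i.+1).
  move=> x i; rewrite /f'; have [h|h] := eqVneq (f x : nat) 0; first by rewrite h.
  rewrite ?(negbTE h).
  case: insubP => [j _ ej|nj].
    rewrite -[Some j == Some i]/(j == i) -val_eqE ej /=; lia.
  by move: nj; have := fl x; lia.
have f'N : forall x, (f' x == None) = ((f x : nat) == 0).
  move=> x; rewrite /f'; have [h|h] := eqVneq (f x : nat) 0; first by [].  
  rewrite ?(negbTE h); case: insubP => [j _ ej|nj] //.
  by move: nj; have := fl x; lia.
have [k0 k0S] : exists k0, k0 \in S by apply/card_gt0P; lia.
apply: (red f').
  apply: (@embed_hom H G _ false S k0) => //.
  - move=> x y; rewrite !inE !f'N => /eqP fx /eqP fy xy.
    have fxy : f x = f y by apply: ord_inj; rewrite fx fy.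
    apply/negbTE; apply: (hf (f x)).1; rewrite ?inE ?fxy //; lia.
  - by move=> x y xS yS _; apply/negbTE; apply: sS.
  - by apply: leq_trans (max_card _) _; lia.
move=> i; split => hi u v; rewrite !inE !f'S => /eqP fu /eqP fv.
- have fuv : f u = f v by apply: ord_inj; rewrite fu fv.
  apply: (hf (f u)).1; rewrite ?inE ?fuv //; lia.
- have fuv : f u = f v by apply: ord_inj; rewrite fu fv.
  apply: (hf (f u)).2; rewrite ?inE ?fuv //; lia.
Qed.

Lemma C2 (H G : sgraph) l s : ARS H l -> 0 < s -> s <= l.-1 -> RedP H G l s ->
  forall K : {set V G}, clique K -> #|V H| < #|K| -> False.
Proof.
move=> ars s0 sl red K cK cardK.
have [l0 A1 _ _] := ars.
have [f hf] := A1 s ltac:(lia).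
have fl : forall x, (f x : nat) < l by move=> x; have := ltn_ord (f x); lia.
pose f' x : option 'I_(l.-1) := if (f x : nat) == l.-1 then None else insub (f x : nat).
have f'S : forall x i, (f' x == Some i) = ((f x : nat) == i).
  move=> x i; rewrite /f'; have [h|h] := eqVneq (f x : nat) l.-1.
    rewrite ?h /=; have := ltn_pord' i => hi; have -> : (l.-1 == i) = false by apply/negbTE; rewrite neq_ltn; lia. by [].
  rewrite ?(negbTE h).
  case: insubP => [j _ ej|nj].
    by rewrite -[Some j == Some i]/(j == i) -val_eqE ej.
  by move: nj; have := fl x; lia.
have f'N : forall x, (f' x == None) = ((f x : nat) == l.-1).
  move=> x; rewrite /f'; have [h|h] := eqVneq (f x : nat) l.-1; first by rewrite ?h ?eqxx.
  rewrite ?(negbTE h); case: insubP => [j _ ej|nj] //.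
  by move: nj; have := fl x; lia.
have [k0 k0K] : exists k0, k0 \in K by apply/card_gt0P; lia.
apply: (red f').
  apply: (@embed_hom H G _ true K k0) => //.
  - move=> x y; rewrite !inE !f'N => /eqP fx /eqP fy xy.
    have fxy : f x = f y by apply: ord_inj; rewrite fx fy.
    apply: (hf (f x)).2; rewrite ?inE ?fxy //; lia.
  all: try by move=> x y xS yS xy; apply: cK.
  by apply: leq_trans (max_card _) _; lia.
move=> i; split => hi u v; rewrite !inE !f'S => /eqP fu /eqP fv.
- have fuv : f u = f v by apply: ord_inj; rewrite fu fv.
  apply: (hf (f u)).1; rewrite ?inE ?fuv //; lia.
- have fuv : f u = f v by apply: ord_inj; rewrite fu fv.
  apply: (hf (f u)).2; rewrite ?inE ?fuv //; lia.
Qed.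

Definition bclique (J H : sgraph) (b : bool) (P : {set V H}) : Prop :=
  exists2 A : {set V H}, A \subset P & [/\ induced_on A J, clique (P :\: A) &
     forall x y, x \in A -> y \in P :\: A -> adj x y = b].

Lemma cliques_plus_mono (H : sgraph) l (Q1 Q2 : {set V H} -> Prop) :
  (forall P, Q1 P -> Q2 P) -> cliques_plus l Q1 -> cliques_plus l Q2.
Proof. by move=> h [f [q c]]; exists f; split => //; apply: h. Qed.

Lemma union_b (J H : sgraph) l : cliques_plus l (@union_clique J H) ->
  cliques_plus l (@bclique J H false).
Proof.
apply: cliques_plus_mono => P [A AP [iA cA nA]]; exists A => //; split => //.
by move=> x y xA yP; apply/negbTE; apply: nA.
Qed.

Lemma join_b (J H : sgraph) l : cliques_plus l (@join_clique J H) ->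
  cliques_plus l (@bclique J H true).
Proof.
by apply: cliques_plus_mono => P [A AP [iA cA nA]]; exists A => //; split.
Qed.

Lemma C34 (H G J : sgraph) l (b : bool) : RedP H G l 0 ->
  cliques_plus l (@bclique J H b) ->
  forall (e : V J -> V G) (K : {set V G}), injective e ->
  (forall i j, adj i j = adj (e i) (e j)) -> clique K -> #|V H| < #|K| ->
  (forall j k, k \in K -> adj (e j) k = b /\ e j != k) -> False.
Proof.
move=> red [f [[A AP [iA cA bA]] cl]] e K einj eadj cK cardK eK.
have [k0 k0K] : exists k0, k0 \in K by apply/card_gt0P; lia.
apply: (red f); last by move=> i; split => //.
apply: (@embed H G J _ A b true e K k0) => //.
all: try by move=> x y xP yP xy; apply: cA.
all: try by move=> k k' kK k'K kk'; apply: cK.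
by apply: leq_trans (max_card _) _; lia.
Qed.

Lemma emb_K1 (G : sgraph) (v : V G) :
  exists e : V K1 -> V G, [/\ injective e, (forall i j, adj i j = adj (e i) (e j)) &
     forall j, e j = v].
Proof.
exists (fun _ => v); split => //.
- by move=> [[|i] hi] [[|j] hj] //= _; apply: ord_inj.
- by move=> i j; rewrite adj_irr /= /mkadj andbF.
Qed.

Definition e3 (G : sgraph) (x y z : V G) (i : nat) :=
  if i == 0 then x else if i == 1 then y else z.

Lemma emb_S3 (G : sgraph) (x y z : V G) :
  x != y -> x != z -> y != z -> ~~ adj x y -> ~~ adj x z -> ~~ adj y z ->
  exists e : V S3 -> V G, [/\ injective e, (forall i j, adj i j = adj (e i) (e j)) &
     forall j, e j \in [set x; y; z]].
Proof.
move=> xy xz yz axy axz ayz.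
exists (fun i : 'I_3 => e3 x y z i); split.
- move=> [[|[|[|i]]] hi] [[|[|[|j]]] hj] //= E; apply: ord_inj => //=;
  move: E; rewrite /e3 /= => E; subst;
  by rewrite ?eqxx in xy xz yz.
- move=> [[|[|[|i]]] hi] [[|[|[|j]]] hj] //=; rewrite /mkadj /e3 /= ?andbF;
  by rewrite ?adj_irr // ?(negbTE axy) ?(negbTE axz) ?(negbTE ayz) // adj_sym
     ?(negbTE axy) ?(negbTE axz) ?(negbTE ayz).
- by move=> [[|[|[|i]]] hi] //=; rewrite /e3 /= !inE eqxx ?orbT.
Qed.

Lemma emb_P3 (G : sgraph) (x y z : V G) :
  x != y -> x != z -> y != z -> ~~ adj x y -> ~~ adj x z -> adj y z ->
  exists e : V P3bar -> V G, [/\ injective e, (forall i j, adj i j = adj (e i) (e j)) &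
     forall j, e j \in [set x; y; z]].
Proof.
move=> xy xz yz axy axz ayz.
have ayx : ~~ adj y x by rewrite adj_sym.
have azx : ~~ adj z x by rewrite adj_sym.
have azy : adj z y by rewrite adj_sym.
exists (fun i : 'I_3 => e3 y x z i); split.
- move=> [[|[|[|i]]] hi] [[|[|[|j]]] hj] //= E; apply: ord_inj => //=;
  move: E; rewrite /e3 /= => E; subst;
  by rewrite ?eqxx in xy xz yz.
- move=> [[|[|[|i]]] hi] [[|[|[|j]]] hj] //=; rewrite /mkadj /e3 /= ?andbF;
  by rewrite ?adj_irr // ?(negbTE axy) ?(negbTE axz) ?(negbTE ayx) ?(negbTE azx) ?ayz ?azy.
- by move=> [[|[|[|i]]] hi] //=; rewrite /e3 /= !inE eqxx ?orbT.
Qed.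

Definition e4 (G : sgraph) (a b c d : V G) (i : nat) :=
  if i == 0 then a else if i == 1 then b else if i == 2 then c else d.

Lemma emb_C4 (G : sgraph) (a b c d : V G) :
  a != b -> a != c -> a != d -> b != c -> b != d -> c != d ->
  ~~ adj a b -> ~~ adj c d -> adj a c -> adj a d -> adj b c -> adj b d ->
  exists e : V C4 -> V G, [/\ injective e, (forall i j, adj i j = adj (e i) (e j)) &
     forall j, e j \in [set a; b; c; d]].
Proof.
move=> ab ac ad bc bd cd nab ncd aac aad abc abd.
have nba : ~~ adj b a by rewrite adj_sym.
have ndc : ~~ adj d c by rewrite adj_sym.
have aca : adj c a by rewrite adj_sym.
have ada : adj d a by rewrite adj_sym.
have acb : adj c b by rewrite adj_sym.
have adb : adj d b by rewrite adj_sym.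
exists (fun i : 'I_4 => e4 a c b d i); split.
- move=> [[|[|[|[|i]]]] hi] [[|[|[|[|j]]]] hj] //= E; apply: ord_inj => //=;
  move: E; rewrite /e4 /= => E; subst;
  by rewrite ?eqxx in ab ac ad bc bd cd.
- move=> [[|[|[|[|i]]]] hi] [[|[|[|[|j]]]] hj] //=; rewrite /mkadj /e4 /= ?andbF;
  by rewrite ?adj_irr // ?(negbTE nab) ?(negbTE ncd) ?(negbTE nba) ?(negbTE ndc)
    ?aac ?aad ?abc ?abd ?aca ?ada ?acb ?adb.
- by move=> [[|[|[|[|i]]]] hi] //=; rewrite /e4 /= !inE eqxx ?orbT.
Qed.

Lemma config (G : sgraph) (u v u' v' : V G) :
  nonedge u v -> nonedge u' v' -> [set u; v] != [set u'; v'] ->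
  (exists x y z : V G, [/\ x != y, x != z, y != z, ~~ adj x y & ~~ adj x z]) \/
  (exists a b c d : V G, [/\ a != b, a != c, a != d, b != c & b != d] /\ c != d /\
     [/\ ~~ adj a b, ~~ adj c d, adj a c, adj a d & adj b c] /\ adj b d).
Proof.
move=> /andP[uv nuv] /andP[u'v' nu'v'] ne.
have nvu : ~~ adj v u by rewrite adj_sym.
have nv'u' : ~~ adj v' u' by rewrite adj_sym.
have [E1|n1] := eqVneq u u'.
  subst u'; left; exists u, v, v'; split => //.
  by apply: contraNneq ne => ->.
have [E2|n2] := eqVneq u v'.
  subst v'; left; exists u, v, u'; split => //; try by rewrite eq_sym.
  by apply: contraNneq ne => ->; rewrite setUC.
have [E3|n3] := eqVneq v u'.
  subst u'; left; exists v, u, v'; split => //; try by rewrite eq_sym.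
have [E4|n4] := eqVneq v v'.
  subst v'; left; exists v, u, u'; split => //; try by rewrite eq_sym.
have [a1|a1] := boolP (adj u u'); last by left; exists u, v, u'.
have [a2|a2] := boolP (adj u v'); last by left; exists u, v, v'.
have [a3|a3] := boolP (adj v u'); last by left; exists v, u, u'; split => //; rewrite eq_sym.
have [a4|a4] := boolP (adj v v'); last by left; exists v, u, v'; split => //; rewrite eq_sym.
by right; exists u, v, u', v'.
Qed.

Lemma commonW (G : sgraph) (R : nat) (p q s t : V G) :
  (forall v : V G, #|[set w | ~~ adj v w]| <= R) -> 5 * R <= #|V G| ->
  exists2 W : {set V G}, R <= #|W| &
    forall w, w \in W -> [/\ adj p w, adj q w, adj s w & adj t w].
Proof.
move=> Mb nG.
pose N (v : V G) := [set w | ~~ adj v w].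
pose U := N p :|: N q :|: N s :|: N t.
exists (~: U).
  have h := cardsC U.
  have h1 := (leq_card_setU (N p :|: N q :|: N s) (N t)).1.
  have h2 := (leq_card_setU (N p :|: N q) (N s)).1.
  have h3 := (leq_card_setU (N p) (N q)).1.
  have := Mb p; have := Mb q; have := Mb s; have := Mb t.
  rewrite /U in h; rewrite -/(N p) -/(N q) -/(N s) -/(N t).
  rewrite /U; lia.
move=> w; rewrite !inE !negb_or !negbK.
by case/andP => /andP[/andP[-> ->] ->] ->.
Qed.

Lemma amon_star (G : sgraph) : at_most_one_nonedge G -> star 2 G.
Proof.
move=> am.
have nadj : forall u v w : V G, nonedge u v -> w \notin [set u; v] -> forall x, x \in [set u; v] ->
    nonedge x w -> False.
  move=> u v w n1 wS x xS n2.
  have := am _ _ _ _ n2 n1 => E; move: wS; rewrite -E !inE eqxx orbT; done.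
have [/existsP[u /existsP[v nuv]]|none] := boolP [exists u : V G, exists v : V G, nonedge u v].
  exists [set u; v]; split; first by rewrite cards2; case: (u != v).
  split.
    left => x y xS yS xy; apply/negPn/negP => nxy.
    have := am _ _ _ _ (introT andP (conj xy nxy)) nuv => E.
    by move: xS; rewrite -E !inE eqxx.
  move=> x xS; left => w wS; apply/negPn/negP => nxw.
  apply: (nadj u v w nuv wS x xS); rewrite /nonedge nxw andbT.
  by apply: contraNneq wS => <-.
exists set0; split; first by rewrite cards0.
split; last by move=> v; rewrite in_set0.
left => x y _ _ xy; apply/negPn/negP => nxy; move/negP: none; apply.
by apply/existsP; exists x; apply/existsP; exists y; rewrite /nonedge xy.
Qed.

Lemma part2 (H : sgraph) l : ARS H l -> exists n0 : nat, forall G : sgraph,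
  reduced (Forb H) G -> n0 <= #|V G| -> at_most_one_nonedge G.
Proof.
move=> ars; have [l0 A1 [uK1 jS3 jC4 jP3] _] := ars.
pose r := #|V H|.+1; pose R := 2 ^ (r + r).
exists (5 * R) => G red nG.
have [s sl RP] := reduced_RedP ars red.
have noS : forall S : {set V G}, stable S -> r <= #|S| -> False.
  by move=> S sS c; apply: (C1 ars sl RP sS).
have RT : R <= #|[set: V G]| by rewrite cardsT; lia.
case: (@ramsey G (r + r) r r [set: V G] (leqnn _) RT) => [[C _ [cC rC]]|[S _ [sS rS]]];
  last by case: (noS S sS rS).
have s0 : s = 0.
  case: s sl RP => // s' sl RP; case: (C2 ars (ltn0Sn s') sl RP cC rC).
subst s.
have Mb : forall v : V G, #|[set w | ~~ adj v w]| <= R.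
  move=> v; set M := [set w | ~~ adj v w] :\ v.
  have : #|[set w | ~~ adj v w]| = #|M| + 1.
    by rewrite (cardsD1 v) inE adj_irr /= addnC.
  suff : #|M| < R by lia.
  rewrite ltnNge; apply/negP => hM.
  case: (@ramsey G (r + r) r r M (leqnn _) hM) => [[K KM [cK rK]]|[S _ [sS rS]]];
    last by case: (noS S sS rS).
  have [e [einj eadj ev]] := emb_K1 v.
  apply: (C34 RP (union_b uK1) einj eadj cK rK) => j k kK; rewrite ev.
  have := subsetP KM k kK; rewrite !inE => /andP[kv nvk].
  by split; [exact: negbTE | rewrite eq_sym].
have Jc : forall (J : sgraph) (e : V J -> V G) (p q s t : V G),
    cliques_plus l (@bclique J H true) -> injective e ->
    (forall i j, adj i j = adj (e i) (e j)) ->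
    (forall j, e j \in [set p; q; s; t]) -> False.
  move=> J e p q s t hJ einj eadj ein.
  have [W RW hW] := commonW p q s t Mb nG.
  case: (@ramsey G (r + r) r r W (leqnn _) RW) => [[K KW [cK rK]]|[S _ [sS rS]]];
    last by case: (noS S sS rS).
  apply: (C34 RP hJ einj eadj cK rK) => j k kK.
  have [h1 h2 h3 h4] := hW k (subsetP KW k kK).
  have ajk : adj (e j) k.
    by move: (ein j); rewrite !inE -!orbA; case/or4P => /eqP->.
  split => //; apply: contraTneq ajk => ->; by rewrite adj_irr.
move=> u v u' v' n1 n2.
have [//|ne] := eqVneq [set u; v] [set u'; v'].
exfalso.
case: (config n1 n2 ne) => [[x [y [z [xy xz yz axy axz]]]]|[a [b [c [d [[ab ac ad bc bd] [cd [[nab ncd aac aad abc] abd]]]]]]]].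
- have [ayz|ayz] := boolP (adj y z).
    have [e [einj eadj ein]] := emb_P3 xy xz yz axy axz ayz.
    apply: (Jc _ e x y z z (join_b jP3) einj eadj) => j.
    by move: (ein j); rewrite !inE -!orbA; case/or3P => ->; rewrite ?orbT.
  have [e [einj eadj ein]] := emb_S3 xy xz yz axy axz ayz.
  apply: (Jc _ e x y z z (join_b jS3) einj eadj) => j.
  by move: (ein j); rewrite !inE -!orbA; case/or3P => ->; rewrite ?orbT.
- have [e [einj eadj ein]] := emb_C4 ab ac ad bc bd cd nab ncd aac aad abc abd.
  exact: (Jc _ e a b c d (join_b jC4) einj eadj ein).
Qed.

Unset Implicit Arguments.
Theorem corollary3p3 (H : sgraph) (l : nat) :
  ARS H l ->
  [/\ chi_c (Forb H) l,
      (exists n0 : nat, forall G : sgraph,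
          reduced (Forb H) G -> n0 <= #|V G| -> at_most_one_nonedge G) &
      critical 2 H].
Proof.
move=> ars; split; first exact: (chi_c_part ars).
  exact: (part2 ars).
have [n0 h] := part2 ars; exists n0 => K rK nK; apply: amon_star; exact: h.
Qed.
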